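(* Let $A \in \mathbb{R}^{m \times r}$, $B \in \mathbb{R}^{r \times n}$, and for $\kappa\in\mathbb{R}^r_+$ let $f_\kappa\colon\mathbb{R}^n_+\to\mathbb{R}^m$, $f_\kappa(x)=A_\kappa x^B$. Assume $\mathrm{rank}(A)=s$, and let $S \subseteq \mathbb{R}^n$ be a vector subspace with $\dim(S) = s$. Let $Z\in \mathbb{R}^{(n-s)\times n}$ and $C\in \mathbb{R}^{n \times s}$ satisfy $\mathrm{im}(C)=S=\ker(Z)$. Let $A'\in \mathbb{R}^{s \times r}$ with $\ker(A)=\ker(A')$, set $\widetilde{A} = C A' \in \mathbb{R}^{n \times r}$, and for $\kappa \in \mathbb{R}^r_+$, $\lambda \in \mathbb{R}^n_+$ let $\Gamma_{\kappa,\lambda}\in\mathbb{R}^{n\times n}$ be the block matrix with top block $Z$ and bottom block $A'_\kappa B_\lambda$. The following are equivalent: (inj) $f_\kappa$ is injective with respect to $S$, for all $\kappa \in \mathbb{R}^r_+$; (det) viewed as a polynomial in the variables $\kappa_1,\dots,\kappa_r,\lambda_1,\dots,\lambda_n$, $\det(\Gamma_{\kappa,\lambda})$ is nonzero and all of its nonzero coefficients have the same sign; (min) for all $I\subseteq [n]$, $J\subseteq [r]$ of cardinality $s$, the product $\det(\widetilde{A}_{I,J}) \det(B_{J,I})$ either is zero or has the same sign as all other nonzero such products, and at least one such product is nonzero.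
   Context: $\mathbb{R}_+$ denotes the strictly positive reals. $(x^B)_j=\prod_i x_i^{b_{ji}}$ (real exponents), $A_\kappa=A\,\mathrm{diag}(\kappa)$, $A'_\kappa=A'\,\mathrm{diag}(\kappa)$, $B_\lambda=B\,\mathrm{diag}(\lambda)$, $[n]=\{1,\dots,n\}$, and $M_{K,L}$ is the submatrix of $M$ with rows in $K$ and columns in $L$. A function $g$ on $\mathbb{R}^n_+$ is injective with respect to $S$ if $x,y\in\mathbb{R}^n_+$, $x\ne y$, $x-y\in S$ imply $g(x)\neq g(y)$. Convention: if $s=n$, then $\Gamma_{\kappa,\lambda}=A'_\kappa B_\lambda$ (and $Z$ is empty); determinants of $0\times 0$ matrices equal $1$. *)

(* Defs.v *)
From Stdlib Require Import Reals ClassicalEpsilon FunctionalExtensionality.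
From HB Require Import structures.
From mathcomp Require Import all_boot all_order all_algebra.
Set Implicit Arguments. Unset Strict Implicit. Unset Printing Implicit Defensive.
Import GRing.Theory.

Definition Req_bool (x y : R) : bool := if Req_EM_T x y then true else false.
Lemma Req_boolP : Equality.axiom Req_bool.
Proof. by move=> x y; rewrite /Req_bool; case: Req_EM_T => h; constructor. Qed.
HB.instance Definition _ := hasDecEq.Build R Req_boolP.

Definition Rfind (P : pred R) (n : nat) : option R :=
  match excluded_middle_informative (exists x, P x) with
  | left h => Some (proj1_sig (constructive_indefinite_description _ h))
  | right _ => None
  end.
Lemma Rfind_correct P n x : Rfind P n = Some x -> P x.
Proof.
rewrite /Rfind; case: excluded_middle_informative => // h [<-].
exact: proj2_sig (constructive_indefinite_description _ h).
Qed.
Lemma Rfind_complete (P : pred R) : (exists x, P x) -> exists n, Rfind P n.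
Proof. by move=> h; exists 0%N; rewrite /Rfind; case: excluded_middle_informative. Qed.
Lemma Rfind_ext (P Q : pred R) : P =1 Q -> Rfind P =1 Rfind Q.
Proof. by move=> h; have -> : P = Q by apply: functional_extensionality. Qed.
HB.instance Definition _ := hasChoice.Build R Rfind_correct Rfind_complete Rfind_ext.

Lemma R_addrA : associative Rplus. Proof. by move=> x y z; rewrite Rplus_assoc. Qed.
Lemma R_addrC : commutative Rplus. Proof. exact: Rplus_comm. Qed.
Lemma R_add0r : left_id R0 Rplus. Proof. exact: Rplus_0_l. Qed.
Lemma R_addNr : left_inverse R0 Ropp Rplus. Proof. exact: Rplus_opp_l. Qed.
HB.instance Definition _ := GRing.isZmodule.Build R R_addrA R_addrC R_add0r R_addNr.

Lemma R_mulrA : associative Rmult. Proof. by move=> x y z; rewrite Rmult_assoc. Qed.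
Lemma R_mulrC : commutative Rmult. Proof. exact: Rmult_comm. Qed.
Lemma R_mul1r : left_id R1 Rmult. Proof. exact: Rmult_1_l. Qed.
Lemma R_mulrDl : left_distributive Rmult Rplus. Proof. exact: Rmult_plus_distr_r. Qed.
Lemma R_oner_neq0 : R1 != R0. Proof. by apply/eqP; exact: R1_neq_R0. Qed.
HB.instance Definition _ :=
  GRing.Zmodule_isComNzRing.Build R R_mulrA R_mulrC R_mul1r R_mulrDl R_oner_neq0.

Definition Rinv' (x : R) : R := if Req_EM_T x R0 then R0 else Rinv x.
Lemma R_mulVf (x : R) : x != R0 -> Rmult (Rinv' x) x = R1.
Proof.
move/eqP=> hx; rewrite /Rinv'; case: Req_EM_T => [h|h]; first by case: hx.
exact: Rinv_l.
Qed.
Lemma R_invr0 : Rinv' R0 = R0.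
Proof. by rewrite /Rinv'; case: Req_EM_T. Qed.
HB.instance Definition _ := GRing.ComNzRing_isField.Build R R_mulVf R_invr0.

Local Open Scope ring_scope.

Definition posv (n : nat) (x : 'cV[R]_n) : Prop := forall i, Rlt 0 (x i 0).

Definition monB (r n : nat) (B : 'M[R]_(r, n)) (x : 'cV[R]_n) : 'cV[R]_r :=
  \col_(j < r) \prod_(i < n) Rpower (x i 0) (B j i).

(* M_kappa = M diag(kappa) *)
Definition diagw (n : nat) (k : 'cV[R]_n) : 'M[R]_n := diag_mx k^T.

Definition fk (m r n : nat) (A : 'M[R]_(m, r)) (B : 'M[R]_(r, n))
  (kappa : 'cV[R]_r) (x : 'cV[R]_n) : 'cV[R]_m :=
  (A *m diagw kappa) *m monB B x.

Definition inj_wrt (m n : nat) (g : 'cV[R]_n -> 'cV[R]_m) (S : 'cV[R]_n -> Prop) :=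
  forall x y, posv x -> posv y -> x <> y -> S (x - y) -> g x <> g y.

Definition im_mx (n s : nat) (C : 'M[R]_(n, s)) (x : 'cV[R]_n) : Prop :=
  exists v : 'cV[R]_s, x = C *m v.
Definition ker_mx (p n : nat) (Z : 'M[R]_(p, n)) (x : 'cV[R]_n) : Prop :=
  Z *m x = 0.

(* Gamma_{kappa,lambda} = [ Z ; A'_kappa B_lambda ], an n x n matrix
   (when s = n, Z has no rows and Gamma = A'_kappa B_lambda) *)
Definition Gamma (n s r : nat) (hsn : (s <= n)%N) (Z : 'M[R]_(n - s, n))
  (A' : 'M[R]_(s, r)) (B : 'M[R]_(r, n)) (kappa : 'cV[R]_r) (lambda : 'cV[R]_n)
  : 'M[R]_n :=
  castmx (subnK hsn, erefl n)
    (col_mx Z ((A' *m diagw kappa) *m (B *m diagw lambda))).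

(* Polynomials in the variables kappa_1..kappa_r, lambda_1..lambda_n, with
   all exponents bounded by d: a coefficient for every exponent vector. *)
Definition expv (r n d : nat) := ({ffun 'I_r -> 'I_d.+1} * {ffun 'I_n -> 'I_d.+1})%type.

Definition peval (r n d : nat) (c : expv r n d -> R)
  (kappa : 'cV[R]_r) (lambda : 'cV[R]_n) : R :=
  \sum_(e : expv r n d)
     c e * (\prod_(k < r) kappa k 0 ^+ e.1 k) * (\prod_(j < n) lambda j 0 ^+ e.2 j).

(* strictly increasing index maps: these enumerate the s-subsets of [n] *)
Definition incr (s n : nat) (f : 'I_s -> 'I_n) : Prop :=
  forall i j : 'I_s, (i < j)%N -> (f i < f j)%N.

(* Main.v *)
Require Import Defs.
From Stdlib Require Import Reals.
From HB Require Import structures.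
From mathcomp Require Import all_boot all_order all_fingroup all_algebra.
From mathcomp Require Import ring lra zify.
Set Implicit Arguments. Unset Strict Implicit. Unset Printing Implicit Defensive.
Import Order.TTheory GRing.Theory Num.Theory.

Definition Rleb r1 r2 := if Rle_dec r1 r2 is left _ then true else false.
Definition Rltb r1 r2 := Rleb r1 r2 && (r1 != r2).
Lemma RlebP r1 r2 : reflect (Rle r1 r2) (Rleb r1 r2).
Proof. by rewrite /Rleb; apply: (iffP idP); case: Rle_dec. Qed.
Lemma RltbP r1 r2 : reflect (Rlt r1 r2) (Rltb r1 r2).
Proof.
rewrite /Rltb /Rleb; apply: (iffP idP); case: Rle_dec=> //=.
- by case=> // r1Er2 /eqP[].
- by move=> _ r1Lr2; apply/eqP/Rlt_not_eq.
by move=> Nr1Lr2 r1Lr2; case: Nr1Lr2; left.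
Qed.
Section S.
Local Open Scope R_scope.
Lemma Rleb_norm_add x y : Rleb (Rabs (x + y)) (Rabs x + Rabs y).
Proof. by apply/RlebP/Rabs_triang. Qed.
Lemma addr_Rgtb0 x y : Rltb 0 x -> Rltb 0 y -> Rltb 0 (x + y).
Proof. by move/RltbP=> Hx /RltbP Hy; apply/RltbP/Rplus_lt_0_compat. Qed.
Lemma Rnorm0_eq0 x : Rabs x = 0 -> x = 0.
Proof. by move=> H; case: (x == 0) /eqP=> // /Rabs_no_R0. Qed.
Lemma Rleb_leVge x y : Rleb 0 x -> Rleb 0 y -> (Rleb x y) || (Rleb y x).
Proof.
move/RlebP=> Hx /RlebP Hy; case: (Rlt_le_dec x y).
by move/Rlt_le/RlebP=> ->.
by move/RlebP=> ->; rewrite orbT.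
Qed.
Lemma RnormM : {morph Rabs : x y / x * y}.
Proof. exact: Rabs_mult. Qed.
Lemma Rleb_def x y : (Rleb x y) = (Rabs (y - x) == y - x).
Proof.
apply/(sameP (RlebP x y))/(iffP idP)=> [/eqP H| /Rle_minus H].
  apply: Rminus_le; rewrite -Ropp_minus_distr.
  apply/Rge_le/Ropp_0_le_ge_contravar.
  by rewrite -H; apply: Rabs_pos.
apply/eqP/Rabs_pos_eq.
rewrite -Ropp_minus_distr.
by apply/Ropp_0_ge_le_contravar/Rle_ge.
Qed.
Lemma Rltb_def x y : (Rltb x y) = (y != x) && (Rleb x y).
Proof.
apply/(sameP (RltbP x y))/(iffP idP).
  case/andP=> /eqP H /RlebP/Rle_not_gt H2.
  by case: (Rtotal_order x y)=> // [][] // /esym.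
move=> H; apply/andP; split; [apply/eqP|apply/RlebP].
  exact: Rgt_not_eq.
exact: Rlt_le.
Qed.
End S.
HB.instance Definition _ := Num.IntegralDomain_isNumRing.Build R
  Rleb_norm_add addr_Rgtb0 Rnorm0_eq0 Rleb_leVge RnormM Rleb_def Rltb_def.
Lemma RleP : forall x y, reflect (Rle x y) (x <= y)%R.
Proof. exact: RlebP. Qed.
Lemma RltP : forall x y, reflect (Rlt x y) (x < y)%R.
Proof. exact: RltbP. Qed.
Lemma R_total : total (<=%O : rel R).
Proof.
move=> x y; case: (Rle_lt_dec x y) => [/RleP -> //|/Rlt_le/RleP ->];
  by rewrite orbT.
Qed.
HB.instance Definition _ := Order.POrder_isTotal.Build _ R R_total.

Section Sort.
Variables s p : nat.

Definition incrb (f : {ffun 'I_s -> 'I_p}) : bool :=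
  [forall i : 'I_s, forall j : 'I_s, (i < j)%N ==> (f i < f j)%N].
Definition enumI (g : {ffun 'I_s -> 'I_p}) : seq 'I_p :=
  [seq x <- enum 'I_p | x \in codom g].
Definition sortf (g : {ffun 'I_s -> 'I_p}) : {ffun 'I_s -> 'I_p} :=
  [ffun i => nth (g i) (enumI g) i].

Definition ltI {q} := fun x y : 'I_q => (x < y)%N.

Lemma ltI_trans q : transitive (@ltI q).
Proof. by move=> x y z; rewrite /ltI; apply: ltn_trans. Qed.
Lemma ltI_irr q : irreflexive (@ltI q).
Proof. by move=> x; rewrite /ltI ltnn. Qed.

Lemma enum_sorted q : sorted (@ltI q) (enum 'I_q).
Proof.
have := iota_ltn_sorted 0 q; rewrite -val_enum_ord sorted_map.
by apply: sub_sorted => x y.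
Qed.

Lemma enumI_sorted (g : {ffun 'I_s -> 'I_p}) : sorted ltI (enumI g).
Proof. apply: sorted_filter; [exact: ltI_trans| exact: enum_sorted]. Qed.

Lemma enumI_uniq (g : {ffun 'I_s -> 'I_p}) : uniq (enumI g).
Proof. by apply: filter_uniq; apply: enum_uniq. Qed.

Lemma mem_enumI (g : {ffun 'I_s -> 'I_p}) x : (x \in enumI g) = (x \in codom g).
Proof. by rewrite mem_filter mem_enum andbT. Qed.

Lemma size_enumI (g : {ffun 'I_s -> 'I_p}) : injective g -> size (enumI g) = s.
Proof.
move=> ig; rewrite -(card_uniqP (enumI_uniq g)).
rewrite (eq_card (mem_enumI g)) card_codom // card_ord //.
Qed.

Lemma sortf_incr (g : {ffun 'I_s -> 'I_p}) : injective g -> incrb (sortf g).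
Proof.
move=> ig; apply/forallP => i; apply/forallP => j; apply/implyP => lij.
rewrite !ffunE (set_nth_default (g i) (g j)); last by rewrite size_enumI.
have := @sorted_ltn_nth _ _ (@ltI_trans p) (g i) (enumI g) (enumI_sorted g) i j.
by rewrite !inE !size_enumI //; apply.
Qed.

Lemma incr_inj (f : {ffun 'I_s -> 'I_p}) : incrb f -> injective f.
Proof.
move=> /forallP fi i j fij; apply/eqP; case: (ltngtP i j) => [lij|lji|/val_inj -> //].
  by move: (implyP (forallP (fi i) j) lij); rewrite fij ltnn.
by move: (implyP (forallP (fi j) i) lji); rewrite fij ltnn.
Qed.

Lemma incr_sortf (f : {ffun 'I_s -> 'I_p}) : incrb f -> sortf f = f.
Proof.
move=> fi; have e : enumI f = codom f.
  apply: (irr_sorted_eq (@ltI_trans p) (@ltI_irr p)).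
  - exact: enumI_sorted.
  - rewrite codomE; apply: (homo_sorted (e := @ltI s)); last exact: enum_sorted.
    by move=> x y lxy; exact: (implyP (forallP (forallP fi x) y) lxy).
  - by move=> x; rewrite mem_enumI.
apply/ffunP => i; rewrite ffunE e codomE.
rewrite (nth_map i); last by rewrite size_enum_ord.
by congr (f _); apply: val_inj; rewrite /= nth_enum_ord.
Qed.

Lemma sortf_eq (g g' : {ffun 'I_s -> 'I_p}) : injective g -> injective g' -> codom g =i codom g' ->
  sortf g = sortf g'.
Proof.
move=> ig ig' e; have ee : enumI g = enumI g'.
  by apply: eq_filter => x; rewrite e.
apply/ffunP => i; rewrite !ffunE ee; apply: set_nth_default.
by rewrite size_enumI.
Qed.

Lemma incr_uniq (f f' : {ffun 'I_s -> 'I_p}) : incrb f -> incrb f' -> {subset codom f <= codom f'} ->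
  f = f'.
Proof.
move=> fi fi' sub.
have e : codom f =i codom f'.
  apply/subset_cardP; last by apply/subsetP.
  by rewrite !card_codom ?card_ord //; apply: incr_inj.
by rewrite -(incr_sortf fi) -(incr_sortf fi'); apply: sortf_eq => //;
  apply: incr_inj.
Qed.

Definition permfun (g : {ffun 'I_s -> 'I_p}) : {ffun 'I_s -> 'I_s} :=
  [ffun i => insubd i (index (g i) (enumI g))].

Definition permOf (g : {ffun 'I_s -> 'I_p}) : 'S_s :=
  insubd (1%g : {perm 'I_s}) (permfun g).

Lemma permfunE (g : {ffun 'I_s -> 'I_p}) i : injective g -> (permfun g i : nat) = index (g i) (enumI g).
Proof.
move=> ig; rewrite ffunE insubdK //.
have h : (index (g i) (enumI g) < size (enumI g))%N by rewrite index_mem mem_enumI codom_f.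
by move: h; rewrite size_enumI.
Qed.

Lemma permfun_inj (g : {ffun 'I_s -> 'I_p}) : injective g -> injectiveb (permfun g).
Proof.
move=> ig; apply/injectiveP => i j e.
have : (permfun g i : nat) = permfun g j by rewrite e.
rewrite !permfunE // => /(congr1 (nth (g i) (enumI g))).
rewrite !nth_index ?mem_enumI ?codom_f //; exact: ig.
Qed.

Lemma permOfE (g : {ffun 'I_s -> 'I_p}) i : injective g -> (permOf g i : nat) = index (g i) (enumI g).
Proof.
move=> ig; rewrite /permOf -permfunE //.
by rewrite -[in LHS]pvalE insubdK //; apply: permfun_inj.
Qed.

Lemma sortf_permOf (g : {ffun 'I_s -> 'I_p}) i : injective g -> sortf g (permOf g i) = g i.
Proof.
move=> ig; rewrite ffunE (set_nth_default (g i)); last first.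
  by rewrite size_enumI.
by rewrite permOfE // nth_index // mem_enumI codom_f.
Qed.

Lemma sum_inj (R : Type) (idx : R) (op : Monoid.com_law idx)
  (F : {ffun 'I_s -> 'I_p} -> R) :
  \big[op/idx]_(g : {ffun 'I_s -> 'I_p} | injectiveb g) F g =
  \big[op/idx]_(f | incrb f) \big[op/idx]_(σ : 'S_s) F [ffun i => f (σ i)].
Proof.
rewrite pair_big_dep /=.
rewrite (reindex_onto (fun fs : {ffun 'I_s -> 'I_p} * 'S_s =>
                        [ffun i => fs.1 (fs.2 i)])
                      (fun g => (sortf g, permOf g))) /=; last first.
  move=> g /injectiveP ig; apply/ffunP => i; rewrite ffunE /=.
  exact: sortf_permOf.
apply: eq_bigl => [[f σ]] /=.
apply/idP/idP.
  by case/andP => /injectiveP ig /eqP [<- _]; rewrite andbT; apply: sortf_incr.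
rewrite andbT => fi; have fin := incr_inj fi.
have ig : injective [ffun i => f (σ i)].
  by move=> i j; rewrite !ffunE => /fin /perm_inj.
apply/andP; split; first by apply/injectiveP.
have sf : sortf [ffun i => f (σ i)] = f.
  rewrite -{2}(incr_sortf fi); apply: sortf_eq => // x.
  apply/codomP/codomP => [[i ->]|[i ->]]; first by exists (σ i); rewrite ffunE.
  by exists (σ^-1 i)%g; rewrite ffunE permKV.
rewrite sf; apply/eqP; congr pair; apply/permP => i.
apply: fin; rewrite -{1}sf sortf_permOf // ffunE //.
Qed.

End Sort.

Local Open Scope ring_scope.


Section CB.
Variable K : comNzRingType.
Variables s p : nat.

Lemma det_expand (X : 'M[K]_(s, p)) (Y : 'M[K]_(p, s)) :
  \det (X *m Y) = \sum_(g : {ffun 'I_s -> 'I_p})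
      (\prod_i X i (g i)) * \det (rowsub g Y).
Proof.
rewrite /(\det _).
transitivity (\sum_(σ : 'S_s) \sum_(g : {ffun 'I_s -> 'I_p})
   (-1) ^+ σ * ((\prod_i X i (g i)) * \prod_i Y (g i) (σ i))).
  apply: eq_bigr => σ _; rewrite -big_distrr /=; congr (_ * _).
  rewrite (eq_bigr (fun g : {ffun 'I_s -> 'I_p} => \prod_i (X i (g i) * Y (g i) (σ i)))); last first.
    by move=> g _; rewrite big_split.
  rewrite -(bigA_distr_bigA (fun i k => X i k * Y k (σ i))) /=.
  by apply: eq_bigr => i _; rewrite mxE.
rewrite exchange_big /=; apply: eq_bigr => g _.
rewrite big_distrr /=; apply: eq_bigr => σ _.
rewrite mulrCA; congr (_ * (_ * _)).
by apply: eq_bigr => i _; rewrite mxE.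
Qed.


Lemma cauchy_binet (X : 'M[K]_(s, p)) (Y : 'M[K]_(p, s)) :
  \det (X *m Y) = \sum_(f : {ffun 'I_s -> 'I_p} | incrb f)
      \det (colsub f X) * \det (rowsub f Y).
Proof.
rewrite det_expand (bigID (fun g : {ffun 'I_s -> 'I_p} => injectiveb g)) /=.
rewrite [X in _ + X]big1 ?addr0; last first.
  move=> g /injectivePn [i1 [i2 Di12 Eg]].
  by rewrite (determinant_alternate Di12) ?mulr0 // => j; rewrite !mxE Eg.
rewrite (sum_inj _ (fun g => (\prod_i X i (g i)) * \det (rowsub g Y))).
apply: eq_bigr => f fi.
have E : forall σ : 'S_s, rowsub [ffun i => f (σ i)] Y = row_perm σ (rowsub f Y).
  by move=> σ; apply/matrixP => i j; rewrite !mxE ffunE.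
rewrite /(\det (colsub f X)) big_distrl /=; apply: eq_bigr => σ _.
rewrite E row_permE det_mulmx det_perm.
rewrite mulrA; congr (_ * _); rewrite mulrC; congr (_ * _).
by apply: eq_bigr => i _; rewrite !mxE ffunE.
Qed.

End CB.


Lemma colsub_diag (a q b : nat) (P : 'M[R]_(a, q)) (d : 'cV[R]_q) (h : 'I_b -> 'I_q) :
  colsub h (P *m diagw d) = colsub h P *m diagw (rowsub h d).
Proof.
by apply/matrixP => i j; rewrite /diagw !mul_mx_diag !mxE.
Qed.

Lemma det_diagw (b : nat) (P : 'M[R]_b) (d : 'cV[R]_b) :
  \det (P *m diagw d) = \det P * \prod_i d i 0.
Proof.
rewrite det_mulmx /diagw det_diag; congr (_ * _).
by apply: eq_bigr => i _; rewrite !mxE.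
Qed.

Section Q.
Variables (r n s : nat) (A' : 'M[R]_(s, r)) (B : 'M[R]_(r, n)) (C : 'M[R]_(n, s)).

Definition qdet (kappa : 'cV[R]_r) (lambda : 'cV[R]_n) : R :=
  \det ((A' *m diagw kappa) *m (B *m diagw lambda) *m C).

Definition prodmf (f : 'I_s -> 'I_n) (g : 'I_s -> 'I_r) :=
  \det (mxsub f g (C *m A')) * \det (mxsub g f B).

Lemma qexp kappa lambda : qdet kappa lambda =
  \sum_(g : {ffun 'I_s -> 'I_r} | incrb g) \sum_(f : {ffun 'I_s -> 'I_n} | incrb f)
     prodmf f g * (\prod_i kappa (g i) 0) * (\prod_i lambda (f i) 0).
Proof.
rewrite /qdet -mulmxA cauchy_binet; apply: eq_bigr => g _.
rewrite colsub_diag det_diagw -mul_rowsub_mx cauchy_binet big_distrr /=.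
apply: eq_bigr => f _.
rewrite -mul_rowsub_mx colsub_diag det_diagw /prodmf !mxsub_mul det_mulmx.
have -> : \prod_i rowsub g kappa i 0 = \prod_i kappa (g i) 0.
  by apply: eq_bigr => i _; rewrite mxE.
have -> : \prod_i rowsub f lambda i 0 = \prod_i lambda (f i) 0.
  by apply: eq_bigr => i _; rewrite mxE.
have -> : colsub f (rowsub g B) = mxsub g f B by apply/matrixP => i j; rewrite !mxE.
set a := \det (colsub g A'); set c := \det (rowsub f C); set b := \det (mxsub g f B).
set K := \prod_(i < s) _; set L := \prod_(i < s) _.
ring.
Qed.

End Q.


Lemma mx_eq0_cols (a b : nat) (N : 'M[R]_(a, b)) :
  (forall v : 'cV[R]_b, N *m v = 0) -> N = 0.
Proof.
move=> h; apply/matrixP => i j.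
have := congr1 (fun M : 'M[R]_(a, 1) => M i ord0) (h (delta_mx j ord0)).
by rewrite -colE !mxE.
Qed.

Lemma blockdet (p s n : nat) (e : (p + s)%N = n) (Z : 'M[R]_(p, n)) (M : 'M[R]_(s, n))
  (D : 'M[R]_(n, p)) (C : 'M[R]_(n, s)) :
  Z *m D = 1%:M -> Z *m C = 0 ->
  \det (castmx (e, erefl n) (col_mx Z M)) * \det (castmx (erefl n, e) (row_mx D C))
  = \det (M *m C).
Proof.
move=> ZD ZC; subst n; rewrite !castmx_id -det_mulmx mul_col_row ZD ZC.
by rewrite det_lblock det1 mul1r.
Qed.

Lemma blockdet_nz (p s n : nat) (e : (p + s)%N = n) (Z : 'M[R]_(p, n))
  (D : 'M[R]_(n, p)) (C : 'M[R]_(n, s)) :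
  Z *m D = 1%:M -> Z *m C = 0 -> (forall u : 'cV[R]_s, C *m u = 0 -> u = 0) ->
  \det (castmx (erefl n, e) (row_mx D C)) != 0.
Proof.
move=> ZD ZC Cinj; subst n; rewrite castmx_id -det_tr.
apply/negP => /det0P [v vn0]; move/(congr1 trmx); rewrite trmx_mul trmxK trmx0.
rewrite -[v^T]vsubmxK mul_row_col => h.
have ha : usubmx v^T = 0.
  have := congr1 (mulmx Z) h; rewrite mulmxDr !mulmxA ZD ZC mul0mx addr0 mul1mx.
  by rewrite mulmx0.
move: h; rewrite ha mulmx0 add0r => /Cinj hb.
move: vn0; rewrite -[v]trmxK -[v^T]vsubmxK ha hb.
by rewrite (_ : col_mx 0 0 = 0) ?trmx0 ?eqxx //; apply/matrixP => i j; rewrite !mxE; case: split_ordP => k _; rewrite mxE.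
Qed.

Section Gam.
Variables (r n s : nat) (B : 'M[R]_(r, n)) (S : 'cV[R]_n -> Prop)
  (Z : 'M[R]_(n - s, n)) (C : 'M[R]_(n, s)) (A' : 'M[R]_(s, r)) (hsn : (s <= n)%N).
Hypotheses (hSC : forall x, S x <-> im_mx C x) (hSZ : forall x, S x <-> ker_mx Z x)
  (hdimS : \rank C = s).

Lemma Cinj : forall u : 'cV[R]_s, C *m u = 0 -> u = 0.
Proof.
move=> u hu.
have rf : row_free C^T by rewrite /row_free mxrank_tr hdimS.
have := mulmx_free_eq0 u^T rf; rewrite -trmx_mul hu trmx0 eqxx => /esym/eqP.
by move/(congr1 trmx); rewrite trmxK trmx0.
Qed.

Lemma ZC0 : Z *m C = 0.
Proof.
apply: mx_eq0_cols => v; rewrite -mulmxA.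
by apply/(proj1 (hSZ _))/(proj2 (hSC _)); exists v.
Qed.

Lemma Zfree : row_free Z.
Proof.
have k1 : (kermx Z^T <= C^T)%MS.
  apply/row_subP => i; set u := row i (kermx Z^T).
  have : u *m Z^T = 0 by apply/sub_kermxP; rewrite row_sub.
  move/(congr1 trmx); rewrite trmx_mul trmxK trmx0 => h.
  have [v hv] : im_mx C u^T by apply/hSC/hSZ.
  apply/submxP; exists v^T; rewrite -trmx_mul -hv trmxK //.
have k2 : (C^T <= kermx Z^T)%MS.
  by apply/sub_kermxP; rewrite -trmx_mul ZC0 trmx0.
have e1 : \rank (kermx Z^T) = s.
  have := mxrankS k1; have := mxrankS k2; rewrite mxrank_tr hdimS; lia.
move: e1; rewrite mxrank_ker mxrank_tr => e1.
have := rank_leq_col Z.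
rewrite /row_free => h; apply/eqP; lia.
Qed.

Lemma gamma_c0 : exists c0 : R, c0 != 0 /\ forall kappa lambda,
  \det (Gamma hsn Z A' B kappa lambda) = c0 * qdet A' B C kappa lambda.
Proof.
have [D ZD] := row_freeP Zfree.
set W := castmx (erefl n, subnK hsn) (row_mx D C).
have Wn0 : \det W != 0 by exact: (blockdet_nz (Z := Z) (subnK hsn) ZD ZC0 Cinj).
exists (\det W)^-1; split; first by rewrite invr_eq0.
move=> kappa lambda; rewrite /qdet /Gamma.
rewrite -(blockdet (subnK hsn) _ ZD ZC0) -/W.
by rewrite mulrC -mulrA mulfV // mulr1.
Qed.

End Gam.


Lemma expP (t : R) : 0 < exp t.
Proof. by apply/RltP; apply: exp_pos. Qed.

Lemma exp_gt1 (t : R) : 0 < t -> 1 < exp t.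
Proof. by move/RltP => h; apply/RltP; have := exp_increasing _ _ h; rewrite exp_0. Qed.

Lemma exp_lt1 (t : R) : t < 0 -> exp t < 1.
Proof. by move/RltP => h; apply/RltP; have := exp_increasing _ _ h; rewrite exp_0. Qed.

Lemma exp_ge (t : R) : 1 + t <= exp t.
Proof.
have [->|tn0] := eqVneq t 0; first by rewrite exp_0 addr0.
by apply/ltW/RltP/exp_ineq1/eqP.
Qed.

Lemma expD (x y : R) : exp (x + y) = exp x * exp y.
Proof. exact: exp_plus. Qed.

Lemma exp_big (I : finType) (F : I -> R) : \prod_i exp (F i) = exp (\sum_i F i).
Proof. by symmetry; apply: (big_morph exp expD exp_0). Qed.

Definition phi (t : R) : R := if t == 0 then 1 else (exp t - 1) / t.

Lemma phi_eq t : phi t * t = exp t - 1.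
Proof.
rewrite /phi; case: eqVneq => [->|tn0]; first by rewrite exp_0 mulr0 subrr.
by rewrite mulrVK ?unitfE.
Qed.

Lemma phi_pos t : 0 < phi t.
Proof.
have e := phi_eq t.
have [tn|tp|->] := ltgtP t 0; last by rewrite /phi eqxx ltr01.
- have := exp_lt1 tn; nra.
- have := exp_gt1 tp; nra.
Qed.

Definition lnv (n : nat) (x : 'cV[R]_n) : 'cV[R]_n := \col_i ln (x i 0).

Lemma monB_exp (r n : nat) (B : 'M[R]_(r, n)) (x : 'cV[R]_n) :
  monB B x = \col_j exp ((B *m lnv x) j 0).
Proof.
apply/matrixP => j k; rewrite !mxE exp_big; congr exp.
by apply: eq_bigr => i _; rewrite mxE.
Qed.

Lemma shift_mu (r n : nat) (B : 'M[R]_(r, n)) (x y a : 'cV[R]_n) :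
  lnv x = lnv y + a ->
  exists mu : 'cV[R]_r, posv mu /\ monB B x - monB B y = diagw mu *m (B *m a).
Proof.
move=> hl.
exists (\col_j (exp ((B *m lnv y) j 0) * phi ((B *m a) j 0))); split.
  by move=> j; apply/RltP; rewrite mxE mulr_gt0 ?expP ?phi_pos.
apply/matrixP => j k; rewrite (ord1 k) !monB_exp hl mulmxDr.
rewrite /diagw mul_diag_mx !mxE expD.
set W := \sum_(j0 < n) B j j0 * a j0 0.
have e := phi_eq W; set L := exp _.
rewrite -mulrA e; ring.
Qed.


Lemma det_ker (k : nat) (N : 'M[R]_k) (u : 'cV[R]_k) : u != 0 -> N *m u = 0 -> \det N = 0.
Proof.
move=> un0 hu; apply/eqP; apply: contraR un0 => hd.
have uN : N \in unitmx by rewrite unitmxE unitfE.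
by rewrite -(mulKmx uN u) hu mulmx0.
Qed.

Lemma ker_det (k : nat) (N : 'M[R]_k) : \det N = 0 -> exists2 u : 'cV[R]_k, u != 0 & N *m u = 0.
Proof.
rewrite -det_tr => /eqP /det0P [v vn0 hv]; exists v^T.
  by apply: contra vn0 => /eqP/(congr1 trmx); rewrite trmxK trmx0 => ->.
by rewrite -[N]trmxK -trmx_mul hv trmx0.
Qed.

Lemma diagwM (k : nat) (a b : 'cV[R]_k) :
  diagw a *m diagw b = diagw (\col_i (a i 0 * b i 0)).
Proof.
rewrite /diagw mulmx_diag; congr diag_mx; apply/matrixP => i j; rewrite !mxE //.
Qed.

Lemma diagw_mulE (k q : nat) (a : 'cV[R]_k) (N : 'M[R]_(k, q)) i j :
  (diagw a *m N) i j = a i 0 * N i j.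
Proof. by rewrite /diagw mul_diag_mx !mxE. Qed.

Section Main.
Variables (m r n s : nat) (A : 'M[R]_(m, r)) (B : 'M[R]_(r, n))
  (S : 'cV[R]_n -> Prop) (Z : 'M[R]_(n - s, n)) (C : 'M[R]_(n, s))
  (A' : 'M[R]_(s, r)) (hsn : (s <= n)%N).
Hypotheses (hSC : forall x, S x <-> im_mx C x) (hSZ : forall x, S x <-> ker_mx Z x)
  (hdimS : \rank C = s) (hkerA' : forall v : 'cV[R]_r, A *m v = 0 <-> A' *m v = 0).

Definition INJ := forall kappa : 'cV[R]_r, posv kappa -> inj_wrt (fk A B kappa) S.
Definition POSNZ := forall (kappa : 'cV[R]_r) (lambda : 'cV[R]_n),
  posv kappa -> posv lambda -> qdet A' B C kappa lambda != 0.

Lemma fk_diff (kappa : 'cV[R]_r) x y :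
  fk A B kappa x - fk A B kappa y = A *m (diagw kappa *m (monB B x - monB B y)).
Proof. by rewrite /fk -mulmxBr mulmxA. Qed.

Lemma inj_posnz : INJ -> POSNZ.
Proof.
move=> hinj kappa lambda hk hl; apply/negP => /eqP hq.
set M := A' *m diagw kappa *m (B *m diagw lambda).
have [u un0 hu] := ker_det hq.
set v := C *m u.
have vn0 : v != 0 by apply: contra un0 => /eqP /(Cinj hdimS) ->.
have Sv : S v by apply/hSC; exists u.
set a := diagw lambda *m v.
have aE : forall i, a i 0 = lambda i 0 * v i 0 by move=> i; rewrite diagw_mulE.
set y : 'cV[R]_n := \col_i (if v i 0 == 0 then 1 else v i 0 / (exp (a i 0) - 1)).
set x : 'cV[R]_n := \col_i (y i 0 * exp (a i 0)).
have yE : forall i, y i 0 = if v i 0 == 0 then 1 else v i 0 / (exp (a i 0) - 1).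
  by move=> i; rewrite mxE.
have xE : forall i, x i 0 = y i 0 * exp (a i 0) by move=> i; rewrite mxE.
have BaE : B *m a = B *m diagw lambda *m v by rewrite mulmxA.
have vE : v = C *m u by [].
clearbody x y; clearbody a; clearbody v.
have ypos : forall i, 0 < y i 0.
  move=> i; rewrite yE; case: eqVneq => [_|vn]; first exact: ltr01.
  have li : 0 < lambda i 0 by apply/RltP.
  have [vneg|vpos|] := ltgtP (v i 0) 0; last by move/eqP: vn.
  - have ha : a i 0 < 0 by rewrite aE pmulr_rlt0.
    have := exp_lt1 ha => he.
    by rewrite -mulrNN -invrN divr_gt0 // oppr_gt0 // subr_lt0.
  - have ha : 0 < a i 0 by rewrite aE pmulr_rgt0.
    have := exp_gt1 ha => he.
    by rewrite divr_gt0 // subr_gt0.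
have xpos : forall i, 0 < x i 0 by move=> i; rewrite xE mulr_gt0 ?expP.
have xy : x - y = v.
  apply/matrixP => i k; rewrite (ord1 k) !mxE xE yE.
  case: eqVneq => [v0|vn].
    by rewrite aE v0 mulr0 exp_0 mulr1 subrr.
  have ha : a i 0 != 0 by rewrite aE mulf_neq0 // lt0r_neq0 //; apply/RltP.
  have he : exp (a i 0) - 1 != 0.
    apply: contra ha => /eqP he; apply/eqP.
    by apply: exp_inv; rewrite exp_0; apply/eqP; rewrite -subr_eq0 he.
  by field.
have hln : lnv x = lnv y + a.
  apply/matrixP => i k; rewrite (ord1 k) !mxE xE.
  rewrite ln_mult ?ln_exp //; first by apply/RltP; exact: ypos.
  exact: exp_pos.
have [mu [hmu hdiff]] := shift_mu B hln.
set kappa' : 'cV[R]_r := \col_j (kappa j 0 / mu j 0).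
have hk' : posv kappa'.
  move=> j; apply/RltP; rewrite mxE divr_gt0 //; apply/RltP; [exact: hk| exact: hmu].
have hkk : diagw kappa' *m diagw mu = diagw kappa.
  rewrite diagwM; congr diagw; apply/matrixP => j k; rewrite (ord1 k) !mxE divfK //.
  by rewrite lt0r_neq0 //; apply/RltP; exact: hmu.
apply: (hinj kappa' hk' x y).
- by move=> i; apply/RltP; exact: xpos.
- by move=> i; apply/RltP; exact: ypos.
- by move=> exy; move: vn0; rewrite -xy exy subrr eqxx.
- by rewrite xy.
apply/eqP; rewrite -subr_eq0 fk_diff hdiff (mulmxA (diagw kappa')) hkk; apply/eqP.
apply/hkerA'.
rewrite BaE vE.
have -> : A' *m (diagw kappa *m (B *m diagw lambda *m (C *m u))) = M *m C *m u.
  by rewrite /M !mulmxA.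
exact: hu.
Qed.


Lemma posnz_inj : POSNZ -> INJ.
Proof.
move=> hp kappa hk x y hx hy nxy Sxy exy.
have [u hu] : im_mx C (x - y) by apply/hSC.
set v := x - y in Sxy hu.
have vn0 : v != 0 by rewrite /v subr_eq0; apply/eqP.
have un0 : u != 0 by apply: contra vn0 => /eqP u0; rewrite hu u0 mulmx0.
set lambda : 'cV[R]_n := \col_i (if v i 0 == 0 then 1 else (ln (x i 0) - ln (y i 0)) / v i 0).
have lE : forall i, lambda i 0 = if v i 0 == 0 then 1 else (ln (x i 0) - ln (y i 0)) / v i 0.
  by move=> i; rewrite mxE.
have vE : forall i, v i 0 = x i 0 - y i 0 by move=> i; rewrite !mxE.
clearbody lambda.
have hl : posv lambda.
  move=> i; apply/RltP; rewrite lE; case: eqVneq => [_|vn]; first exact: ltr01.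
  have [vneg|vpos|] := ltgtP (v i 0) 0; last by move/eqP: vn.
  - have : ln (x i 0) < ln (y i 0).
      by apply/RltP; apply: ln_increasing; [exact: hx|apply/RltP; move: vneg; rewrite vE subr_lt0].
    move=> hlt; rewrite -mulrNN -invrN divr_gt0 // oppr_gt0 ?subr_lt0 //.
  - have : ln (y i 0) < ln (x i 0).
      by apply/RltP; apply: ln_increasing; [exact: hy|apply/RltP; move: vpos; rewrite vE subr_gt0].
    by move=> hlt; rewrite divr_gt0 // subr_gt0.
set a := diagw lambda *m v.
have aE : forall i, a i 0 = ln (x i 0) - ln (y i 0).
  move=> i; rewrite diagw_mulE lE; case: eqVneq => [v0|vn]; last by rewrite divfK.
  rewrite v0 mulr0; move/eqP: v0; rewrite vE subr_eq0 => /eqP ->; by rewrite subrr.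
have aE' : forall i, (lnv y + a) i 0 = ln (y i 0) + a i 0 by move=> i; rewrite !mxE.
have hln : lnv x = lnv y + a.
  by apply/matrixP => i k; rewrite (ord1 k) aE' aE addrC subrK mxE.
have [mu [hmu hdiff]] := shift_mu B hln.
set kappa2 : 'cV[R]_r := \col_j (kappa j 0 * mu j 0).
have hk2 : posv kappa2.
  move=> j; apply/RltP; rewrite mxE mulr_gt0 //; apply/RltP; [exact: hk| exact: hmu].
have e0 : A *m (diagw kappa2 *m (B *m a)) = 0.
  have := congr1 (fun w => w - fk A B kappa y) exy; rewrite subrr fk_diff hdiff.
  by rewrite (mulmxA (diagw kappa)) diagwM.
move/hkerA': e0 => e0.
have := hp kappa2 lambda hk2 hl; rewrite /qdet.
rewrite (det_ker un0) ?eqxx //.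
move: e0; rewrite /a hu.
by rewrite !mulmxA.
Qed.

End Main.


Definition ind (s k : nat) (g : {ffun 'I_s -> 'I_k}) : {ffun 'I_k -> 'I_2} :=
  [ffun j => if j \in codom g then ord_max else ord0].

Lemma prod_ind (s k : nat) (g : {ffun 'I_s -> 'I_k}) (F : 'I_k -> R) :
  injective g -> \prod_j F j ^+ (ind g j) = \prod_i F (g i).
Proof.
move=> ig.
rewrite (eq_bigr (fun j => if j \in [set g i | i : 'I_s] then F j else 1)); last first.
  move=> j _; rewrite ffunE; have -> : (j \in [set g i | i : 'I_s]) = (j \in codom g).
    by apply/imsetP/codomP => [[i _ ->]|[i ->]]; exists i.
  by case: (j \in codom g); rewrite ?expr1 ?expr0.
rewrite -big_mkcond /= big_imset //=; by move=> i j _ _ /ig.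
Qed.

Lemma incrbP (s p : nat) (f : {ffun 'I_s -> 'I_p}) : reflect (incr f) (incrb f).
Proof.
apply: (iffP forallP) => [h i j lij|h i]; first exact: (implyP (forallP (h i) j) lij).
by apply/forallP => j; apply/implyP; apply: h.
Qed.

Lemma nested_ge (I J : finType) (P : pred I) (Q : pred J) (F : I -> J -> R) i0 j0 :
  P i0 -> Q j0 -> (forall i j, P i -> Q j -> 0 <= F i j) ->
  F i0 j0 <= \sum_(i | P i) \sum_(j | Q j) F i j.
Proof.
move=> Pi Qj h; rewrite (bigD1 i0) //= (bigD1 j0) //= -addrA lerDl.
by rewrite addr_ge0 ?sumr_ge0 // => [j /andP [Qj' _]|i /andP [Pi' _]];
  [apply: h | apply: sumr_ge0 => j Qj'; apply: h].
Qed.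

Section Main2.
Variables (m r n s : nat) (A : 'M[R]_(m, r)) (B : 'M[R]_(r, n))
  (S : 'cV[R]_n -> Prop) (Z : 'M[R]_(n - s, n)) (C : 'M[R]_(n, s))
  (A' : 'M[R]_(s, r)) (hsn : (s <= n)%N).
Hypotheses (hSC : forall x, S x <-> im_mx C x) (hSZ : forall x, S x <-> ker_mx Z x)
  (hdimS : \rank C = s) (hkerA' : forall v : 'cV[R]_r, A *m v = 0 <-> A' *m v = 0).

Definition DETP := exists (d : nat) (c : expv r n d -> R),
      (forall (kappa : 'cV[R]_r) (lambda : 'cV[R]_n),
          \det (Gamma hsn Z A' B kappa lambda) = peval c kappa lambda)
      /\ (exists e, c e <> 0)
      /\ ((forall e, Rle 0 (c e)) \/ (forall e, Rle (c e) 0)).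

Lemma det_posnz : DETP -> POSNZ B C A'.
Proof.
move=> [d [c [hc [[e0 ce0] hs]]]] kappa lambda hk hl.
have [c0 [c0n0 hg]] := gamma_c0 B A' hsn hSC hSZ hdimS.
have monpos : forall e : expv r n d,
    0 < (\prod_(k < r) kappa k 0 ^+ e.1 k) * (\prod_(j < n) lambda j 0 ^+ e.2 j).
  move=> e; apply: mulr_gt0; apply: prodr_gt0 => i _; apply: exprn_gt0; apply/RltP.
    exact: hk.
  exact: hl.
suff : \det (Gamma hsn Z A' B kappa lambda) != 0.
  by rewrite hg mulf_eq0 negb_or => /andP [].
rewrite hc /peval.
have t0 : c e0 * ((\prod_(k < r) kappa k 0 ^+ e0.1 k) * (\prod_(j < n) lambda j 0 ^+ e0.2 j)) != 0.
  by rewrite mulf_neq0 //; [apply/eqP| rewrite lt0r_neq0 // monpos].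
case: hs => hs.
- have : c e0 * ((\prod_(k < r) kappa k 0 ^+ e0.1 k) * (\prod_(j < n) lambda j 0 ^+ e0.2 j))
       <= \sum_e c e * (\prod_(k < r) kappa k 0 ^+ e.1 k) * (\prod_(j < n) lambda j 0 ^+ e.2 j).
    rewrite (bigD1 e0) //= -mulrA lerDl sumr_ge0 // => e _.
    by rewrite -mulrA; apply: mulr_ge0; [apply/RleP; exact: hs | exact: ltW (monpos e)].
  have : 0 < c e0 * ((\prod_(k < r) kappa k 0 ^+ e0.1 k) * (\prod_(j < n) lambda j 0 ^+ e0.2 j)).
    by rewrite lt0r t0; apply: mulr_ge0; [apply/RleP; exact: hs | exact: ltW (monpos e0)].
  move=> h1 h2; rewrite gt_eqF //; exact: (lt_le_trans h1 h2).
- have : \sum_e c e * (\prod_(k < r) kappa k 0 ^+ e.1 k) * (\prod_(j < n) lambda j 0 ^+ e.2 j)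
       <= c e0 * ((\prod_(k < r) kappa k 0 ^+ e0.1 k) * (\prod_(j < n) lambda j 0 ^+ e0.2 j)).
    rewrite (bigD1 e0) //= -mulrA gerDl sumr_le0 // => e _.
    by rewrite -mulrA; apply: mulr_le0_ge0; [apply/RleP; exact: hs | exact: ltW (monpos e)].
  have : c e0 * ((\prod_(k < r) kappa k 0 ^+ e0.1 k) * (\prod_(j < n) lambda j 0 ^+ e0.2 j)) < 0.
    by rewrite lt_neqAle t0; apply: mulr_le0_ge0; [apply/RleP; exact: hs | exact: ltW (monpos e0)].
  move=> h1 h2; rewrite lt_eqF //; exact: (le_lt_trans h2 h1).
Qed.


Definition MINP :=
      (exists (f : 'I_s -> 'I_n) (g : 'I_s -> 'I_r), incr f /\ incr g /\ prodmf A' B C f g <> 0)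
      /\ ((forall f g, incr f -> incr g -> Rle 0 (prodmf A' B C f g))
          \/ (forall f g, incr f -> incr g -> Rle (prodmf A' B C f g) 0)).

Lemma prodmf_ext (f f' : 'I_s -> 'I_n) (g g' : 'I_s -> 'I_r) :
  f =1 f' -> g =1 g' -> prodmf A' B C f g = prodmf A' B C f' g'.
Proof.
move=> ef eg; rewrite /prodmf; congr (_ * _); congr determinant; apply/matrixP => i j;
  by rewrite !mxE ?ef ?eg.
Qed.

Lemma min_det : MINP -> DETP.
Proof.
case=> [[f0 [g0 [hf0 [hg0 hp0]]]] hsg].
have [c0 [c0n0 hg]] := gamma_c0 B A' hsn hSC hSZ hdimS.
pose T (e : expv r n 1) := \sum_(g : {ffun 'I_s -> 'I_r} | incrb g)
   \sum_(f : {ffun 'I_s -> 'I_n} | incrb f)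
   (if (ind g, ind f) == e then prodmf A' B C f g else 0).
exists 1%N, (fun e => c0 * T e); split; [|split].
- move=> kappa lambda; rewrite hg qexp /peval.
  transitivity (c0 * \sum_(e : expv r n 1) T e * (\prod_(k < r) kappa k 0 ^+ e.1 k) *
      (\prod_(j < n) lambda j 0 ^+ e.2 j)); last first.
    by rewrite big_distrr /=; apply: eq_bigr => e _; rewrite !mulrA.
  congr (_ * _).
  transitivity (\sum_(e : expv r n 1) \sum_(g : {ffun 'I_s -> 'I_r} | incrb g)
     \sum_(f : {ffun 'I_s -> 'I_n} | incrb f)
     (if (ind g, ind f) == e then prodmf A' B C f g * (\prod_(k < r) kappa k 0 ^+ e.1 k) *
      (\prod_(j < n) lambda j 0 ^+ e.2 j) else 0)); last first.
    apply: eq_bigr => e _; rewrite /T !big_distrl /=; apply: eq_bigr => g _.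
    rewrite !big_distrl /=; apply: eq_bigr => f _.
    by case: eqP; rewrite ?mul0r.
  rewrite [RHS]exchange_big /=; apply: eq_bigr => g gi.
  rewrite [RHS]exchange_big /=; apply: eq_bigr => f fi.
  rewrite -big_mkcond /= (big_pred1 (ind g, ind f)); last by move=> e; rewrite eq_sym.
  rewrite /= !prod_ind //; exact: incr_inj.
- exists (ind [ffun i => g0 i], ind [ffun i => f0 i]).
  have G0 : incrb [ffun i => g0 i] by apply/incrbP => i j lij; rewrite !ffunE; apply: hg0.
  have F0 : incrb [ffun i => f0 i] by apply/incrbP => i j lij; rewrite !ffunE; apply: hf0.
  have pe : prodmf A' B C [ffun i => f0 i] [ffun i => g0 i] = prodmf A' B C f0 g0.
    by apply: prodmf_ext => i; rewrite ffunE.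
  apply/eqP; rewrite mulf_neq0 //.
  case: hsg => hsg.
  + have h := @nested_ge _ _ _ _ (fun (g : {ffun 'I_s -> 'I_r}) (f : {ffun 'I_s -> 'I_n}) =>
       if (ind g, ind f) == (ind [ffun i => g0 i], ind [ffun i => f0 i])
       then prodmf A' B C f g else 0) _ _ G0 F0.
    rewrite eqxx pe in h.
    have : 0 < prodmf A' B C f0 g0 by rewrite lt0r; apply/andP; split; [apply/eqP|apply/RleP; apply: hsg].
    move=> hpos; rewrite gt_eqF // /T; apply: (lt_le_trans hpos); apply: h.
    move=> g f gi fi; case: ifP => _ //; apply/RleP; apply: hsg; exact/incrbP.
  + have h := @nested_ge _ _ _ _ (fun (g : {ffun 'I_s -> 'I_r}) (f : {ffun 'I_s -> 'I_n}) =>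
       - if (ind g, ind f) == (ind [ffun i => g0 i], ind [ffun i => f0 i])
       then prodmf A' B C f g else 0) _ _ G0 F0.
    rewrite eqxx pe in h.
    have : prodmf A' B C f0 g0 < 0 by rewrite lt_neqAle; apply/andP; split; [apply/eqP|apply/RleP; apply: hsg].
    move=> hneg; rewrite lt_eqF // /T.
    have h' : - prodmf A' B C f0 g0 <= - T (ind [ffun i => g0 i], ind [ffun i => f0 i]).
      rewrite /T -sumrN; under eq_bigr do rewrite -sumrN.
      apply: h => g f gi fi; case: ifP => _; rewrite ?oppr0 //.
      rewrite oppr_ge0; apply/RleP; apply: hsg; exact/incrbP.
    rewrite lerN2 in h'; exact: (le_lt_trans h' hneg).
- have Tsg : (forall e, 0 <= T e) \/ (forall e, T e <= 0).
    case: hsg => hsg; [left|right] => e; rewrite /T.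
    + apply: sumr_ge0 => g gi; apply: sumr_ge0 => f fi; case: ifP => _ //.
      apply/RleP; apply: hsg; exact/incrbP.
    + apply: sumr_le0 => g gi; apply: sumr_le0 => f fi; case: ifP => _ //.
      apply/RleP; apply: hsg; exact/incrbP.
  have [c0n|c0p|] := ltgtP c0 0; last by move/eqP: c0n0.
  + case: Tsg => hT; [right|left] => e; apply/RleP; have := hT e; set t := T e => ht.
    * by rewrite nmulr_rle0.
    * by rewrite nmulr_rge0.
  + case: Tsg => hT; [left|right] => e; apply/RleP; have := hT e; set t := T e => ht.
    * by rewrite pmulr_rge0.
    * by rewrite pmulr_rle0.
Qed.

End Main2.


Lemma continuity_eq f g : f =1 g -> continuity f -> continuity g.
Proof.
move=> Hfg Hf x eps Heps.
have [y [Hy1 Hy2]]:= Hf x eps Heps.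
by exists y; split=> // z; rewrite -!Hfg; exact: Hy2.
Qed.

Lemma cont_const (c : R) : continuity (fun _ => c).
Proof. by apply: continuity_const => x y. Qed.

Lemma cont_add f g : continuity f -> continuity g -> continuity (fun x => f x + g x).
Proof. by move=> hf hg; apply: (continuity_eq _ (continuity_plus _ _ hf hg)). Qed.

Lemma cont_mul f g : continuity f -> continuity g -> continuity (fun x => f x * g x).
Proof. by move=> hf hg; apply: (continuity_eq _ (continuity_mult _ _ hf hg)). Qed.

Lemma cont_id : continuity (fun x : R => x).
Proof. exact: (continuity_eq _ (derivable_continuous _ derivable_id)). Qed.

Lemma cont_sum (I : finType) (P : pred I) (F : I -> R -> R) :
  (forall i, continuity (F i)) -> continuity (fun x => \sum_(i | P i) F i x).
Proof.
move=> H; elim: (index_enum I) => [|a l IHl].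
  by apply: (continuity_eq _ (cont_const 0)) => x; rewrite big_nil.
case Hpa: (P a).
  apply: (continuity_eq _ (cont_add (H a) IHl)) => x.
  by rewrite big_cons Hpa.
by apply: (continuity_eq _ IHl) => x; rewrite big_cons Hpa.
Qed.

Lemma cont_prod (I : finType) (F : I -> R -> R) :
  (forall i, continuity (F i)) -> continuity (fun x => \prod_i F i x).
Proof.
move=> H; elim: (index_enum I) => [|a l IHl].
  by apply: (continuity_eq _ (cont_const 1)) => x; rewrite big_nil.
by apply: (continuity_eq _ (cont_mul (H a) IHl)) => x; rewrite big_cons.
Qed.

Lemma cont_aff (a b : R) : continuity (fun t => (1 - t) * a + t * b).
Proof.
apply: cont_add; apply: cont_mul; try exact: cont_const; try exact: cont_id.
by apply: cont_add; [exact: cont_const | apply: (continuity_eq _ (cont_mul (cont_const (-1)) cont_id)) => x; rewrite mulN1r].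
Qed.

Definition pt (s k : nat) (g0 : {ffun 'I_s -> 'I_k}) (e : R) : 'cV[R]_k :=
  \col_j (if j \in codom g0 then 1 else e).

Section Eps.
Variables (s k : nat) (g0 : {ffun 'I_s -> 'I_k}) (e : R).
Hypotheses (e0 : 0 < e) (e1 : e <= 1).

Lemma pt_ge0 j : 0 < pt g0 e j 0.
Proof. by rewrite mxE; case: ifP. Qed.

Lemma pt_le1 j : pt g0 e j 0 <= 1.
Proof. by rewrite mxE; case: ifP. Qed.

Lemma pt_prod01 (g : {ffun 'I_s -> 'I_k}) :
  0 <= \prod_i pt g0 e (g i) 0 /\ \prod_i pt g0 e (g i) 0 <= 1.
Proof.
split; first by apply: prodr_ge0 => i _; apply: ltW; apply: pt_ge0.
by apply: prodr_ile1 => i _; rewrite ltW ?pt_ge0 ?pt_le1.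
Qed.

Lemma pt_prod_eq1 : \prod_i pt g0 e (g0 i) 0 = 1.
Proof. by apply: big1 => i _; rewrite mxE codom_f. Qed.

Lemma pt_prod_le (g : {ffun 'I_s -> 'I_k}) : incrb g0 -> incrb g -> g != g0 ->
  \prod_i pt g0 e (g i) 0 <= e.
Proof.
move=> ig0 ig ne.
case: (boolP [exists i, g i \notin codom g0]) => [/existsP [i hi]|/existsPn h]; last first.
  have H := incr_uniq ig ig0; exfalso; move/eqP: ne; apply.
  by apply: H => x /codomP [i ->]; move: (h i); rewrite negbK.
rewrite (bigD1 i) //= mxE (negbTE hi).
have [h1 h2] : 0 <= \prod_(j | j != i) pt g0 e (g j) 0 /\ \prod_(j | j != i) pt g0 e (g j) 0 <= 1.
  split; first by apply: prodr_ge0 => j _; apply: ltW; apply: pt_ge0.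
  by apply: prodr_ile1 => j _; rewrite ltW ?pt_ge0 ?pt_le1.
by rewrite -[X in _ <= X]mulr1 ler_wpM2l // ltW.
Qed.

End Eps.


Section EpsQ.
Variables (r n s : nat) (A' : 'M[R]_(s, r)) (B : 'M[R]_(r, n)) (C : 'M[R]_(n, s)).

Definition Kabs := \sum_(g : {ffun 'I_s -> 'I_r} | incrb g)
  \sum_(f : {ffun 'I_s -> 'I_n} | incrb f) `|prodmf A' B C f g|.

Lemma eps_bound (g0 : {ffun 'I_s -> 'I_r}) (f0 : {ffun 'I_s -> 'I_n}) e :
  incrb g0 -> incrb f0 -> 0 < e -> e <= 1 ->
  `|qdet A' B C (pt g0 e) (pt f0 e) - prodmf A' B C f0 g0| <= e * Kabs.
Proof.
move=> ig0 if0 e0 e1.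
have P0 : prodmf A' B C f0 g0 = \sum_(g : {ffun 'I_s -> 'I_r} | incrb g)
  \sum_(f : {ffun 'I_s -> 'I_n} | incrb f)
  (if (g == g0) && (f == f0) then prodmf A' B C f g else 0).
  rewrite (bigD1 g0) //= [X in _ + X]big1 ?addr0; last first.
    by move=> g; case/andP => _ ne; apply: big1 => f _; rewrite (negbTE ne).
  rewrite (bigD1 f0) //= [X in _ + X]big1 ?addr0 ?eqxx //.
  by move=> f; case/andP => _ ne; rewrite (negbTE ne) andbF.
rewrite qexp P0 -sumrB.
apply: (le_trans (ler_norm_sum _ _ _)).
rewrite /Kabs mulr_sumr; apply: ler_sum => g ig.
rewrite -sumrB; apply: (le_trans (ler_norm_sum _ _ _)).
rewrite mulr_sumr; apply: ler_sum => f iff.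
case: eqP => [->|/eqP ng] /=; first case: eqP => [->|/eqP nf] /=.
- by rewrite !pt_prod_eq1 !mulr1 subrr normr0 mulr_ge0 // ltW.
- have [b0 b1] := @pt_prod01 _ _ f0 e e0 e1 f.
  rewrite pt_prod_eq1 mulr1 subr0 normrM (ger0_norm b0) [e * _]mulrC.
  by apply: ler_wpM2l => //; apply: pt_prod_le.
- have [a0 a1] := @pt_prod01 _ _ g0 e e0 e1 g; have [b0 b1] := @pt_prod01 _ _ f0 e e0 e1 f.
  rewrite subr0 -mulrA normrM (ger0_norm (mulr_ge0 a0 b0)) [e * _]mulrC.
  apply: ler_wpM2l => //; apply: (le_trans (ler_wpM2l a0 b1)); rewrite mulr1.
  exact: pt_prod_le.
Qed.

End EpsQ.

Definition ptt (k : nat) (a b : 'cV[R]_k) (t : R) : 'cV[R]_k :=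
  \col_j ((1 - t) * a j 0 + t * b j 0).

Lemma ptt0 k (a b : 'cV[R]_k) : ptt a b 0 = a.
Proof. by apply/matrixP => i j; rewrite (ord1 j) mxE subr0 mul1r mul0r addr0. Qed.
Lemma ptt1 k (a b : 'cV[R]_k) : ptt a b 1 = b.
Proof. by apply/matrixP => i j; rewrite (ord1 j) mxE subrr mul0r mul1r add0r. Qed.

Lemma ptt_pos k (a b : 'cV[R]_k) t : (forall i, 0 < a i 0) -> (forall i, 0 < b i 0) ->
  0 <= t -> t <= 1 -> posv (ptt a b t).
Proof.
move=> ha hb t0 t1 i; apply/RltP; rewrite mxE.
suff h : 0 < (1 - t) * a i 0 + t * b i 0 by [].
have := ha i; have := hb i; set x := a i 0; set y := b i 0 => hy hx.
have h2 : 0 <= t * y by rewrite mulr_ge0 // ltW.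
have [tl|tg] := ltP t 1.
  have : 0 < (1 - t) * x by rewrite mulr_gt0 // subr_gt0.
  lra.
have -> : t = 1 by apply/eqP; rewrite eq_le t1 tg.
by rewrite subrr mul0r add0r mul1r.
Qed.

Section Mixed.
Variables (r n s : nat) (A' : 'M[R]_(s, r)) (B : 'M[R]_(r, n)) (C : 'M[R]_(n, s)).

Lemma Kabs_ge g f : incrb g -> incrb f -> `|prodmf A' B C f g| <= Kabs A' B C.
Proof.
move=> ig iff; rewrite /Kabs.
apply: (@nested_ge _ _ (@incrb s r) (@incrb s n) (fun g f => `|prodmf A' B C f g|) g f ig iff).
by move=> *; exact: normr_ge0.
Qed.

Lemma eps_point (g0 : {ffun 'I_s -> 'I_r}) (f0 : {ffun 'I_s -> 'I_n}) :
  incrb g0 -> incrb f0 -> prodmf A' B C f0 g0 != 0 ->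
  exists e, 0 < e /\ e <= 1 /\
    `|qdet A' B C (pt g0 e) (pt f0 e) - prodmf A' B C f0 g0| <= `|prodmf A' B C f0 g0| / 2.
Proof.
move=> ig if0 pn0.
set p := prodmf A' B C f0 g0; set K := Kabs A' B C.
have pp : 0 < `|p| by rewrite normr_gt0.
have Kp : 0 < K by apply: (lt_le_trans pp); apply: Kabs_ge.
set e := Num.min 1 (`|p| / (2 * K)).
have he0 : 0 < e by rewrite lt_min ltr01 divr_gt0 // mulr_gt0.
have he1 : e <= 1 by rewrite ge_min lexx.
exists e; split => //; split => //.
apply: (le_trans (@eps_bound _ _ _ A' B C g0 f0 e ig if0 he0 he1)).
have hm : e <= `|p| / (2 * K) by rewrite ge_min lexx orbT.
apply: (le_trans (ler_wpM2r (ltW Kp) hm)).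
have -> : `|p| / (2 * K) * K = `|p| / 2.
  by field; rewrite lt0r_neq0.
by [].
Qed.

Lemma mixed_contra g1 f1 g2 f2 : incrb g1 -> incrb f1 -> incrb g2 -> incrb f2 ->
  prodmf A' B C f1 g1 < 0 -> 0 < prodmf A' B C f2 g2 -> POSNZ B C A' -> False.
Proof.
move=> ig1 if1 ig2 if2 hn hp hnz.
have [e1 [e10 [e11 b1]]] := eps_point ig1 if1 (ltr0_neq0 hn).
have [e2 [e20 [e21 b2]]] := eps_point ig2 if2 (lt0r_neq0 hp).
set k1 := pt g1 e1; set l1 := pt f1 e1; set k2 := pt g2 e2; set l2 := pt f2 e2.
have q1n : qdet A' B C k1 l1 < 0.
  move: b1; rewrite (ltr0_norm hn) ler_norml; set q := qdet _ _ _ _ _; move=> /andP [_ h].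
  lra.
have q2p : 0 < qdet A' B C k2 l2.
  move: b2; rewrite (gtr0_norm hp) ler_norml; set q := qdet _ _ _ _ _; move=> /andP [h _].
  lra.
pose phi t := qdet A' B C (ptt k1 k2 t) (ptt l1 l2 t).
have cphi : continuity phi.
  apply: (continuity_eq (f := fun t => \sum_(g : {ffun 'I_s -> 'I_r} | incrb g)
     \sum_(f : {ffun 'I_s -> 'I_n} | incrb f)
     prodmf A' B C f g * (\prod_i ((1 - t) * k1 (g i) 0 + t * k2 (g i) 0)) *
       (\prod_i ((1 - t) * l1 (f i) 0 + t * l2 (f i) 0)))).
    move=> t; rewrite /phi qexp; apply: eq_bigr => g _; apply: eq_bigr => f _.
    by congr (_ * _ * _); apply: eq_bigr => i _; rewrite /ptt [in RHS]mxE.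
  apply: cont_sum => g; apply: cont_sum => f.
  apply: cont_mul; [apply: cont_mul; [exact: cont_const|]|];
    apply: cont_prod => i; exact: cont_aff.
have h0 : Rlt (phi 0) 0 by rewrite /phi ptt0 ptt0; apply/RltP.
have h1 : Rlt 0 (phi 1) by rewrite /phi ptt1 ptt1; apply/RltP.
have [z [[z0 z1] fz]] := IVT phi 0 1 cphi Rlt_0_1 h0 h1.
move/RleP: z0 => z0; move/RleP: z1 => z1.
have pk : posv (ptt k1 k2 z).
  by apply: ptt_pos => // i; [exact: (@pt_ge0 _ _ g1 e1 e10) | exact: (@pt_ge0 _ _ g2 e2 e20)].
have pl : posv (ptt l1 l2 z).
  by apply: ptt_pos => // i; [exact: (@pt_ge0 _ _ f1 e1 e10) | exact: (@pt_ge0 _ _ f2 e2 e20)].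
have := hnz _ _ pk pl; rewrite -/(phi z) fz.
by rewrite eqxx.
Qed.

End Mixed.


Section PM.
Variables (r n s : nat) (A' : 'M[R]_(s, r)) (B : 'M[R]_(r, n)) (C : 'M[R]_(n, s)).

Lemma incr_ffun (k : nat) (f : 'I_s -> 'I_k) : incr f -> incrb [ffun i => f i].
Proof. by move=> h; apply/incrbP => i j lij; rewrite !ffunE; apply: h. Qed.

Lemma posnz_min : POSNZ B C A' -> MINP B C A'.
Proof.
move=> hnz; split.
  case: (boolP [exists g : {ffun 'I_s -> 'I_r}, [exists f : {ffun 'I_s -> 'I_n},
      incrb g && incrb f && (prodmf A' B C f g != 0)]]).
    move=> /existsP [g /existsP [f /andP [/andP [ig iff] pn]]].
    exists f, g; split; first exact/incrbP.
    by split; [exact/incrbP| apply/eqP].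
  move=> /existsPn h; exfalso.
  have p1 : posv (const_mx 1 : 'cV[R]_r) by move=> i; rewrite mxE; exact: Rlt_0_1.
  have p2 : posv (const_mx 1 : 'cV[R]_n) by move=> i; rewrite mxE; exact: Rlt_0_1.
  move: (hnz _ _ p1 p2); rewrite qexp big1 ?eqxx // => g ig.
  apply: big1 => f iff; have := h g; move/existsPn/(_ f).
  by rewrite ig iff /= negbK => /eqP ->; rewrite !mul0r.
case: (boolP [forall g : {ffun 'I_s -> 'I_r}, [forall f : {ffun 'I_s -> 'I_n},
      (incrb g && incrb f) ==> (0 <= prodmf A' B C f g)]]) => [hpos|/forallPn [g1 /forallPn [f1]]].
  left => f g hf hg; apply/RleP.
  have := implyP (forallP (forallP hpos [ffun i => g i]) [ffun i => f i]).
  rewrite incr_ffun // incr_ffun // => /(_ isT).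
  by rewrite (@prodmf_ext _ _ _ B C A' [ffun i => f i] f [ffun i => g i] g) // => i; rewrite ffunE.
rewrite negb_imply => /andP [/andP [ig1 if1]]; rewrite -ltNge => hn.
case: (boolP [forall g : {ffun 'I_s -> 'I_r}, [forall f : {ffun 'I_s -> 'I_n},
      (incrb g && incrb f) ==> (prodmf A' B C f g <= 0)]]) => [hneg|/forallPn [g2 /forallPn [f2]]].
  right => f g hf hg; apply/RleP.
  have := implyP (forallP (forallP hneg [ffun i => g i]) [ffun i => f i]).
  rewrite incr_ffun // incr_ffun // => /(_ isT).
  by rewrite (@prodmf_ext _ _ _ B C A' [ffun i => f i] f [ffun i => g i] g) // => i; rewrite ffunE.
rewrite negb_imply => /andP [/andP [ig2 if2]]; rewrite -ltNge => hp.
exfalso; exact: (mixed_contra ig1 if1 ig2 if2 hn hp hnz).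
Qed.

End PM.


Theorem mainTheorem13 (m r n s : nat)
  (A : 'M[R]_(m, r)) (B : 'M[R]_(r, n))
  (S : 'cV[R]_n -> Prop) (Z : 'M[R]_(n - s, n)) (C : 'M[R]_(n, s))
  (A' : 'M[R]_(s, r)) (hsn : (s <= n)%N)
  (hrankA : \rank A = s)
  (hSC : forall x, S x <-> im_mx C x)       (* im(C) = S *)
  (hSZ : forall x, S x <-> ker_mx Z x)      (* S = ker(Z) *)
  (hdimS : \rank C = s)                     (* dim(S) = s, as S = im(C) *)
  (hkerA' : forall v : 'cV[R]_r, A *m v = 0 <-> A' *m v = 0) :
  let At := C *m A' in
  let prodm (f : 'I_s -> 'I_n) (g : 'I_s -> 'I_r) :=
    \det (mxsub f g At) * \det (mxsub g f B) in
  let INJ := forall kappa : 'cV[R]_r, posv kappa -> inj_wrt (fk A B kappa) S in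
  let DET := exists (d : nat) (c : expv r n d -> R),
      (forall (kappa : 'cV[R]_r) (lambda : 'cV[R]_n),
          \det (Gamma hsn Z A' B kappa lambda) = peval c kappa lambda)
      /\ (exists e, c e <> 0)
      /\ ((forall e, Rle 0 (c e)) \/ (forall e, Rle (c e) 0)) in
  let MIN :=
      (exists f g, incr f /\ incr g /\ prodm f g <> 0)
      /\ ((forall f g, incr f -> incr g -> Rle 0 (prodm f g))
          \/ (forall f g, incr f -> incr g -> Rle (prodm f g) 0)) in
  (INJ <-> DET) /\ (DET <-> MIN).

Proof.
move=> At prodm INJ0 DET MIN.
have e1 : INJ0 <-> INJ A B S by [].
have e2 : DET <-> DETP B Z A' hsn by [].
have e3 : MIN <-> MINP B C A' by [].
rewrite e1 e2 e3.
have ip := @inj_posnz m r n s A B S C A' hSC hdimS hkerA'.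
have pi := @posnz_inj m r n s A B S C A' hSC hkerA'.
have dp := det_posnz hSC hSZ hdimS.
have md := min_det hsn hSC hSZ hdimS.
have pm := @posnz_min _ _ _ A' B C.
split; split.
- by move=> h; apply: md; apply: pm; apply: ip.
- by move=> h; apply: pi; apply: dp.
- by move=> h; apply: pm; apply: dp.
- exact: md.
Qed.
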